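(* The multi-resolution LCMM is arbitrage-free: for every $\boldsymbol\theta\in\mathbb R^{\mathcal Z^*}$ and every $\boldsymbol\eta^\star\in\mathbb R^{\mathcal Y^*}$ minimizing $\boldsymbol\eta\mapsto\tilde C(\boldsymbol\theta+\mathbf A\boldsymbol\eta)$, the price vector $\boldsymbol p(\boldsymbol\theta)=\nabla\tilde C(\boldsymbol\theta+\mathbf A\boldsymbol\eta^\star)$ satisfies $\mathbf A^\top\boldsymbol p(\boldsymbol\theta)=\mathbf 0$ and lies in the coherent price space $\mathcal M=\mathrm{conv}\{\boldsymbol\phi(\omega):\omega\in\Omega\}$.
   Context: Fix an integer $K\ge1$, $N=2^K$, $\Omega=\{j/N:j=0,\dots,N-1\}$. Let $T^*$ be the complete binary tree of depth $K$ whose nodes are intervals: the root (level $0$) has $I_{\mathit{root}}=[0,1)$, and each node $z$ at level $k<K$ with $I_z=[\alpha_z,\beta_z)$ has children $\mathrm{left}(z)$, $\mathrm{right}(z)$ at level $k+1$ with intervals $[\alpha_z,\frac{\alpha_z+\beta_z}2)$ and $[\frac{\alpha_z+\beta_z}2,\beta_z)$. Let $\mathcal Z^*$ be its node set, $\mathcal Z_k$ the nodes at level $k$, $\mathrm{level}(z)$ the level of $z$, and $\mathcal Y^*=\mathcal Z^*\setminus\mathcal Z_K$ the inner nodes. Each node $z$ indexes an interval security with payoff $\phi_z(\omega)=1\{\omega\in I_z\}$; $\boldsymbol\phi(\omega)=(\phi_z(\omega))_{z\in\mathcal Z^*}$. Fix liquidity parameters $b_k>0$ for $k=0,\dots,K$,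 and set $B_\ell=\sum_{k=\ell+1}^K b_k$ for $\ell=-1,0,\dots,K$. For $\boldsymbol\theta\in\mathbb R^{\mathcal Z^*}$ write $\boldsymbol\theta_k$ for its restriction to $\mathcal Z_k$, let $C_k(\boldsymbol\theta_k)=b_k\log\sum_{z\in\mathcal Z_k}e^{\theta_z/b_k}$, and let $\tilde C(\boldsymbol\theta)=\sum_{k=0}^K C_k(\boldsymbol\theta_k)$ (direct-sum cost). The constraint matrix $\mathbf A\in\mathbb R^{\mathcal Z^*\times\mathcal Y^*}$ has entries $A_{zy}=B_{\mathrm{level}(z)}$ if $z=y$, $A_{zy}=-b_{\mathrm{level}(z)}$ if $I_z\subsetneq I_y$, and $0$ otherwise. The multi-resolution LCMM has cost function $C(\boldsymbol\theta)=\inf_{\boldsymbol\eta\in\mathbb R^{\mathcal Y^*}}\tilde C(\boldsymbol\theta+\mathbf A\boldsymbol\eta)$. *)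

(* Defs.v *)
From HB Require Import structures.
From mathcomp Require Import all_boot all_order all_algebra.
From mathcomp Require Import all_classical all_reals all_analysis.
Set Implicit Arguments. Unset Strict Implicit. Unset Printing Implicit Defensive.
Import Order.TTheory GRing.Theory Num.Theory.
Local Open Scope ring_scope.

Section MRLCMM.
Variables (R : realType) (K : nat).

(* Nodes of the complete binary tree T* of depth K: node (k, j) is the j-th
   node (j < 2^k) at level k <= K; its interval is [j/2^k, (j+1)/2^k). *)
Definition node := {k : 'I_K.+1 & 'I_(2 ^ k)}.
Definition level (z : node) : nat := val (tag z).
Definition idx (z : node) : nat := val (tagged z).
Definition alpha (z : node) : R := (idx z)%:R / (2 ^ level z)%:R.
Definition beta (z : node) : R := (idx z).+1%:R / (2 ^ level z)%:R.
Definition inI (z : node) (x : R) : bool := (alpha z <= x) && (x < beta z).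

Definition inner := {z : node | (level z < K)%N}.

Definition omega (w : 'I_(2 ^ K)) : R := (val w)%:R / (2 ^ K)%:R.
Definition phi (z : node) (w : 'I_(2 ^ K)) : R :=
  if inI z (omega w) then 1 else 0.

Variable b : nat -> R.
Definition Bsum (l : nat) : R := \sum_(l.+1 <= k < K.+1) b k.

(* I_z strictly contained in I_y (half-open nonempty intervals) *)
Definition strict_sub (z y : node) : bool :=
  [&& alpha y <= alpha z, beta z <= beta y & (alpha z, beta z) != (alpha y, beta y)].

Definition Amat (z : node) (y : inner) : R :=
  if z == val y then Bsum (level z)
  else if strict_sub z (val y) then - b (level z) else 0.

Definition Ck (k : nat) (th : node -> R) : R :=
  b k * ln (\sum_(z : node | level z == k) expR (th z / b k)).
Definition Ctilde (th : node -> R) : R := \sum_(k < K.+1) Ck k th.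

Definition shiftA (th : node -> R) (eta : inner -> R) (z : node) : R :=
  th z + \sum_(y : inner) Amat z y * eta y.

Definition gradC (th : node -> R) (z : node) : R :=
  derive1 (fun t : R => Ctilde (fun z' => th z' + t * (z' == z)%:R)) 0.

End MRLCMM.

(* Main.v *)
Require Import Defs.
From HB Require Import structures.
From mathcomp Require Import all_boot all_order all_algebra.
From mathcomp Require Import all_classical all_reals all_analysis.
From mathcomp Require Import ring lra zify.
Import Order.TTheory GRing.Theory Num.Theory.
Local Open Scope ring_scope.

Section Anal.
Variables (R : realType) (K : nat) (b : nat -> R).
Hypothesis bpos : forall k : nat, (k <= K)%N -> 0 < b k.

Lemma lev_le (z : node K) : (level z <= K)%N.
Proof. by case: z => k j; rewrite /level /= -ltnS. Qed.

Lemma is_derive_bigsum (I : finType) (P : pred I) (h : I -> R -> R) dh (t : R) :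
  (forall i, is_derive t 1 (h i) (dh i)) ->
  is_derive t 1 (fun s => \sum_(i | P i) h i s) (\sum_(i | P i) dh i).
Proof.
move=> H.
have -> : (fun s => \sum_(i | P i) h i s) = \sum_(i | P i) h i.
  by apply: funext => s; rewrite fct_sumE.
elim/big_ind2 : _ => //; first exact: is_derive_cst.
by move=> *; exact: is_deriveD.
Qed.

Definition Sk (y : node K -> R) (k : nat) :=
  \sum_(z : node K | level z == k) expR (y z / b k).

Definition q (y : node K -> R) (z : node K) :=
  expR (y z / b (level z)) / Sk y (level z).

Lemma Sk_gt0 y (z : node K) : 0 < Sk y (level z).
Proof.
rewrite /Sk (bigD1 z) //=; apply: ltr_wpDr; last exact: expR_gt0.
by apply: sumr_ge0 => i _; exact: expR_ge0.
Qed.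

Lemma Sk_ge0 y k : 0 <= Sk y k.
Proof. by apply: sumr_ge0 => i _; exact: expR_ge0. Qed.

Lemma derivC (x a : node K -> R) (t : R) :
  is_derive t 1 (fun s => Ctilde b (fun z => x z + s * a z))
    (\sum_z a z * q (fun z => x z + t * a z) z).
Proof.
rewrite /Ctilde.
set y := fun z => x z + t * a z.
have -> : \sum_z a z * q y z =
   \sum_(k < K.+1) b k * ((Sk y k)^-1 * \sum_(z : node K | level z == k)
          expR (y z / b k) * (a z / b k)).
  rewrite (partition_big (fun z : node K => tag z) xpredT) //=.
  apply: eq_bigr => k _.
  have bk : b k != 0 by rewrite gt_eqF // bpos // -ltnS.
  rewrite big_distrr big_distrr /=; apply: eq_big.
    by move=> z; rewrite /level.
  move=> z /eqP ek.
  have := Sk_gt0 y z; rewrite /q /level ek => /gt_eqF Sk0.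
  by field; rewrite bk Sk0.
apply: is_derive_bigsum => k.
rewrite /Ck.
have -> : (fun s => b k * ln (\sum_(z | level z == k) expR ((x z + s * a z) / b k)))
   = b k \*: (@ln R \o (fun s => \sum_(z | level z == k) expR ((x z + s * a z) / b k))).
  by apply: funext.
apply: is_deriveZ.
apply: is_derive1_comp.
  have : 0 < Sk y k.
    have k0 : (0 < 2 ^ k)%N by rewrite expn_gt0.
    exact: (Sk_gt0 y (Tagged (fun k : 'I_K.+1 => 'I_(2 ^ k)) (Ordinal k0))).
  move=> /is_derive1_ln; rewrite /Sk /y //.
apply: is_derive_bigsum => z.
have -> : (fun s => expR ((x z + s * a z) / b k)) =
  expR \o (fun s => (x z + s * a z) / b k) by [].
apply: is_derive1_comp.
have -> : (fun s => (x z + s * a z) / b k) =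
   cst (x z / b k) + (a z / b k) \*: id.
  apply: funext => s; rewrite !fctE; change ((x z + s * a z) / b k = x z / b k + (a z / b k) * s); ring.
have H : is_derive t 1 (cst (x z / b k) + (a z / b k) \*: id) (0 + (a z / b k) *: (1:R)).
  by apply: is_deriveD.
by move: H; rewrite add0r /GRing.scale /= mulr1.
Qed.
End Anal.
Arguments q {R K} b y z.
Arguments Sk {R K} b y k.
Arguments derivC {R K b} bpos x a t.
Arguments Sk_ge0 {R K} b y k.


Local Close Scope ring_scope.
Lemma strict_nat (i j l k : nat) :
  [&& i * 2 ^ k <= j * 2 ^ l, j.+1 * 2 ^ l <= i.+1 * 2 ^ k &
     ~~ ((j * 2 ^ l == i * 2 ^ k) && (j.+1 * 2 ^ l == i.+1 * 2 ^ k))]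
  = (l < k) && ((l <= k) && (j %/ 2 ^ (k - l) == i)).
Proof.
Local Open Scope nat_scope.
have P0 : 0 < 2 ^ l by rewrite expn_gt0.
case: (leqP l k) => hlk.
- have [d ->] : exists d, k = l + d by exists (k - l); rewrite subnKC.
  rewrite addKn expnD.
  set P := 2 ^ l; set e := 2 ^ d.
  have e0 : 0 < e by rewrite expn_gt0.
  have -> : (i * (P * e) <= j * P) = (i * e <= j).
    by rewrite mulnCA [j * P]mulnC leq_pmul2l.
  have -> : (j.+1 * P <= i.+1 * (P * e)) = (j.+1 <= i.+1 * e).
    by rewrite mulnCA [j.+1 * P]mulnC leq_pmul2l.
  have -> : (j * P == i * (P * e)) = (j == i * e).
    by rewrite mulnCA [j * P]mulnC eqn_pmul2l.
  have -> : (j.+1 * P == i.+1 * (P * e)) = (j.+1 == i.+1 * e).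
    by rewrite mulnCA [j.+1 * P]mulnC eqn_pmul2l.
  have -> : (j %/ e == i) = (i * e <= j < i.+1 * e).
    by rewrite eqn_leq leq_divRL // -ltnS ltn_divLR // andbC.
  have [d0|d0] := posnP d.
    rewrite /e d0 expn0 !muln1 addn0 ltnn /=.
    apply/negbTE/negP => /and3P[h1 h2 /negP h3]; apply: h3.
    by apply/andP; split; apply/eqP; lia.
  have e2 : 1 < e by rewrite /e -(prednK d0) expnS; have := expn_gt0 2 d.-1; lia.
  have -> : ~~ ((j == i * e) && (j.+1 == i.+1 * e)).
    by apply/negP => /andP[/eqP h1 /eqP h2]; nia.
  by rewrite andbT; have -> : l < l + d by lia.
- have [d ->] : exists d, l = k + d.+1 by exists (l - k).-1; lia.
  rewrite expnD.
  set P := 2 ^ k; set e := 2 ^ d.+1.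
  have e2 : 1 < e by rewrite /e expnS; have := expn_gt0 2 d; lia.
  have P1 : 0 < P by rewrite expn_gt0.
  rewrite ltnNge leq_addr /=.
  apply/negbTE/negP => /and3P[h1 h2 _].
  have h1' : i <= j * e.
    by move: h1; rewrite mulnCA [i * P]mulnC leq_pmul2l.
  have h2' : j.+1 * e <= i.+1.
    by move: h2; rewrite mulnCA [i.+1 * P]mulnC leq_pmul2l.
  nia.
Qed.
Local Open Scope ring_scope.

Section Comb.
Variables (R : realType) (K : nat).

Definition mknode (k j : nat) (Hk : (k < K.+1)%N) (Hj : (j < 2 ^ k)%N) : node K :=
  Tagged (fun k : 'I_K.+1 => 'I_(2 ^ k)) (@Ordinal (2 ^ (Ordinal Hk)) j Hj).

Arguments mknode {k j}.

Lemma mknode_level k j Hk Hj : level (@mknode k j Hk Hj) = k.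
Proof. by []. Qed.
Lemma mknode_idx k j Hk Hj : idx (@mknode k j Hk Hj) = j.
Proof. by []. Qed.

Definition leaf (w : 'I_(2 ^ K)) : node K :=
  Tagged (fun k : 'I_K.+1 => 'I_(2 ^ k)) (w : 'I_(2 ^ (@ord_max K))).

Lemma leaf_level w : level (leaf w) = K. Proof. by []. Qed.
Lemma leaf_idx w : idx (leaf w) = w. Proof. by []. Qed.

Lemma node_eq (z z' : node K) : level z = level z' -> idx z = idx z' -> z = z'.
Proof.
case: z => k j; case: z' => k' j'; rewrite /level /idx /= => /val_inj ek.
subst k' => /val_inj -> //.
Qed.

Lemma idx_lt (z : node K) : (idx z < 2 ^ level z)%N.
Proof. by case: z => k j; rewrite /idx /level /=. Qed.
Lemma level_le (z : node K) : (level z <= K)%N.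
Proof. by case: z => k j; rewrite /level /= -ltnS. Qed.

Definition under (z y : node K) : bool :=
  (level y <= level z)%N && (idx z %/ 2 ^ (level z - level y) == idx y)%N.

Lemma under_trans_eq (a b c : node K) :
  under a b -> (level c <= level b)%N -> under b c = under a c.
Proof.
case/andP => lab /eqP eb lcb.
rewrite /under lcb (leq_trans lcb lab) /= -eb -divnMA -expnD.
by have -> : (level a - level b + (level b - level c) = level a - level c)%N by lia.
Qed.

Arguments under_trans_eq {a b c}.

Lemma under_refl z : under z z.
Proof. by rewrite /under leqnn subnn expn0 divn1 eqxx. Qed.

Lemma div_le (a c d e : nat) : (0 < c)%N -> (0 < e)%N ->
  (a%:R / c%:R <= d%:R / e%:R :> R) = (a * e <= d * c)%N.
Proof.
move=> c0 e0.
by rewrite ler_pdivrMr ?ltr0n // mulrAC ler_pdivlMr ?ltr0n // -!natrM ler_nat.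
Qed.

Lemma div_lt (a c d e : nat) : (0 < c)%N -> (0 < e)%N ->
  (a%:R / c%:R < d%:R / e%:R :> R) = (a * e < d * c)%N.
Proof.
move=> c0 e0.
by rewrite ltr_pdivrMr ?ltr0n // mulrAC ltr_pdivlMr ?ltr0n // -!natrM ltr_nat.
Qed.

Lemma div_eq (a c d e : nat) : (0 < c)%N -> (0 < e)%N ->
  (a%:R / c%:R == d%:R / e%:R :> R) = (a * e == d * c)%N.
Proof.
move=> c0 e0.
by rewrite eq_le !div_le // eqn_leq.
Qed.

Lemma phiE z w : phi R z w = (under (leaf w) z)%:R.
Proof.
rewrite /phi /inI /omega /alpha /beta.
rewrite div_le ?expn_gt0 // div_lt ?expn_gt0 //.
have lz := level_le z.
rewrite /under leaf_level lz leaf_idx /=.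
move: (nat_of_ord w) => {}w.
set d := (2 ^ (K - level z))%N.
have eK : (2 ^ K = d * 2 ^ level z)%N by rewrite -expnD subnK.
have d0 : (0 < d)%N by rewrite expn_gt0.
have -> : (idx z * 2 ^ K <= w * 2 ^ level z)%N = (idx z * d <= w)%N.
  by rewrite eK mulnA leq_pmul2r ?expn_gt0.
have -> : (w * 2 ^ level z < (idx z).+1 * 2 ^ K)%N = (w < (idx z).+1 * d)%N.
  by rewrite eK mulnA ltn_pmul2r ?expn_gt0.
have -> : (w %/ d == idx z)%N = (idx z * d <= w < (idx z).+1 * d)%N.
  by rewrite eqn_leq leq_divRL // -ltnS ltn_divLR // andbC.
by case: (_ && _).
Qed.


Lemma strict_subE z y : strict_sub R z y = (level y < level z)%N && under z y.
Proof.
rewrite /strict_sub /alpha /beta !div_le ?expn_gt0 // xpair_eqE !div_eq ?expn_gt0 //.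
exact: strict_nat.
Qed.

Lemma regroup (g : 'I_(2 ^ K) -> R) (y : node K) (k : nat) :
  (level y <= k)%N -> (k <= K)%N ->
  \sum_(z | (level z == k) && under z y) \sum_(w | under (leaf w) z) g w =
  \sum_(w | under (leaf w) y) g w.
Proof.
move=> lyk lkK.
rewrite (exchange_big_dep (fun w => under (leaf w) y)) /=; last first.
  move=> z w /andP[/eqP lz uzy] uwz.
  by rewrite -(under_trans_eq uwz) // lz.
apply: eq_bigr => w uwy.
have Hk : (k < K.+1)%N by [].
have Hj : (w %/ 2 ^ (K - k) < 2 ^ k)%N.
  by rewrite ltn_divLR ?expn_gt0 // -expnD subnKC.
rewrite (big_pred1 (mknode Hk Hj)) // => z /=.
apply/idP/idP.
  case/andP => /andP[/eqP lz _] /andP[_ /eqP iz].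
  by apply/eqP/node_eq; [rewrite lz | rewrite -iz leaf_level lz].
move/eqP => ->.
have uw : under (leaf w) (mknode Hk Hj).
  by rewrite /under leaf_level /= lkK leaf_idx /= eqxx.
by rewrite /= eqxx /= (under_trans_eq uw) //; apply/andP.
Qed.

Section Main.
Variable b : nat -> R.
Hypothesis bpos : forall k : nat, (k <= K)%N -> 0 < b k.

Definition Lsum (p : node K -> R) (z : node K) := \sum_(w | under (leaf w) z) p (leaf w).

Lemma Bsum_gt0 l : (l < K)%N -> 0 < Bsum K b l.
Proof.
move=> lK; rewrite /Bsum big_nat_recr //=.
apply: ltr_wpDl; last exact: bpos.
rewrite big_nat_cond; apply: sumr_ge0 => k /andP[/andP[_ kK] _].
by apply/ltW/bpos/ltnW.
Qed.

Lemma consistency (p : node K -> R) :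
  (forall y : inner K, \sum_(z : node K) Amat b z y * p z = 0) ->
  forall z, p z = Lsum p z.
Proof.
move=> H.
suff S : forall n z, (K - level z <= n)%N -> p z = Lsum p z.
  by move=> z; exact: (S _ z (leqnn _)).
elim => [|n IH] z.
  move=> hz; have lK : level z = K by have := level_le z; lia.
  have Hw : (idx z < 2 ^ K)%N by have := idx_lt z; rewrite lK.
  rewrite /Lsum (big_pred1 (Ordinal Hw)); last first.
    move=> w /=; rewrite /under leaf_level lK leqnn subnn expn0 divn1 leaf_idx.
    by [].
  by congr p; apply: node_eq; rewrite ?leaf_level ?leaf_idx.
move=> hz.
have [hn|hn] := leqP (K - level z) n; first exact: IH.
have lzK : (level z < K)%N by lia.
pose y : inner K := @exist _ _ z lzK.
have := H y.
rewrite (bigD1 z) //= {1}/Amat eqxx.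
have -> : \sum_(z' | z' != z) Amat b z' y * p z' =
    - \sum_(z' | strict_sub R z' z) b (level z') * p z'.
  rewrite -sumrN big_mkcond /= [RHS]big_mkcond /=; apply: eq_bigr => z' _.
  rewrite /Amat /=.
  case: eqVneq => [->|nz] /=.
    by rewrite strict_subE ltnn.
  by case: ifP => _; rewrite ?mulNr ?mul0r ?oppr0.
have -> : \sum_(z' | strict_sub R z' z) b (level z') * p z' =
    \sum_(z' | (level z < level z')%N && under z' z) b (level z') * Lsum p z'.
  apply: eq_big => [z'|z' hz']; first by rewrite strict_subE.
  congr (_ * _); apply: IH.
  move: hz'; rewrite strict_subE => /andP[lt _]; have := level_le z'; lia.
rewrite (partition_big (fun z' : node K => tag z') (fun k : 'I_K.+1 => (level z < k)%N)) /=; last first.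
  by move=> z' /andP[lt _].
have -> : \sum_(k : 'I_K.+1 | (level z < k)%N)
      \sum_(z' | ((level z < level z')%N && under z' z) && (tag z' == k))
         b (level z') * Lsum p z' =
    \sum_(k : 'I_K.+1 | (level z < k)%N) b k * Lsum p z.
  apply: eq_bigr => k lk.
  rewrite /Lsum -(regroup (fun w => p (leaf w)) z k (ltnW lk) (ltn_ord k)).
  rewrite big_distrr /=; apply: eq_big => [z'|z' /andP[_ /eqP <-]] //.
  rewrite /level; case: (eqVneq (tag z') k) => [ek|nk].
    by rewrite ek eqxx andbT; move: lk; rewrite /level => ->.
  rewrite andbF; apply/esym/negbTE; apply: contra nk => /andP[/eqP e _].
  by apply/eqP/val_inj.
rewrite -big_distrl /=.
have -> : \sum_(k : 'I_K.+1 | (level z < k)%N) b k = Bsum K b (level z).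
  by rewrite /Bsum big_geq_mkord; apply: eq_bigl => k.
move=> /eqP; rewrite -mulrN -mulrDr mulf_eq0 gt_eqF ?Bsum_gt0 //= subr_eq0.
by move/eqP.
Qed.

End Main.
End Comb.
Arguments consistency {R K b} bpos {p} _ z.
Arguments phiE {R K} z w.
Arguments node_eq {K} z z'.
Arguments idx_lt {K} z.
Arguments leaf {K} w.
Arguments mknode {K k j}.
Arguments under {K} z y.
Arguments Lsum {R K} p z.


Theorem theorem3 (R : realType) (K : nat) (b : nat -> R) :
  (1 <= K)%N ->
  (forall k : nat, (k <= K)%N -> 0 < b k) ->
  forall (th : node K -> R) (eta_star : inner K -> R),
  (forall eta : inner K -> R,
     Ctilde b (shiftA b th eta_star) <= Ctilde b (shiftA b th eta)) ->
  let p := gradC b (shiftA b th eta_star) in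
  (forall y : inner K, \sum_(z : node K) Amat b z y * p z = 0) /\
  exists lam : 'I_(2 ^ K) -> R,
    (forall w, 0 <= lam w) /\ \sum_w lam w = 1 /\
    forall z : node K, p z = \sum_w lam w * phi R z w.
Proof.
move=> K1 bpos th eta_star Hmin p.
set x := shiftA b th eta_star.
have x0 : forall a : node K -> R, (fun z => x z + 0 * a z) = x.
  by move=> a; apply: funext => z; rewrite mul0r addr0.
have pq : forall z, p z = q b x z.
  move=> z; rewrite /p /gradC derive1E.
  have D := derivC bpos x (fun z' => (z' == z)%:R) 0.
  rewrite (@derive_val _ _ _ _ _ _ _ D) x0.
  rewrite (bigD1 z) //= eqxx mul1r big1 ?addr0 // => z' nz.
  by rewrite (negbTE nz) mul0r.
have AT : forall y : inner K, \sum_(z : node K) Amat b z y * p z = 0.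
  move=> y.
  pose g := fun s => Ctilde b (fun z => x z + s * Amat b z y).
  have gE : forall t, g t = Ctilde b (shiftA b th (fun y' => eta_star y' + t * (y' == y)%:R)).
    move=> t; rewrite /g; congr Ctilde; apply: funext => z.
    rewrite /x /shiftA -addrA; congr (_ + _).
    under [in RHS]eq_bigr => y' _ do rewrite mulrDr.
    rewrite big_split /=; congr (_ + _).
    rewrite (bigD1 y) //= eqxx mulr1 big1 ?addr0; first by rewrite mulrC.
    by move=> y' ny; rewrite (negbTE ny) mulr0 mulr0.
  have D0 : is_derive (0:R) 1 g 0.
    apply: (@derive1_at_min _ g (-1) 1 0).
    - lra.
    - by move=> t _; apply: ex_derive; exact: derivC.
    - by rewrite in_itv /= ltrN10 ltr01.
    - move=> t _; rewrite (gE t) /g x0; exact: Hmin.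
  have D1 : is_derive (0:R) 1 g (\sum_z Amat b z y * q b (fun z => x z + 0 * Amat b z y) z).
    exact: derivC.
  have E : (0:R) = \sum_z Amat b z y * q b (fun z => x z + 0 * Amat b z y) z.
    exact: (etrans (esym (@derive_val _ _ _ _ _ _ _ D0)) (@derive_val _ _ _ _ _ _ _ D1)).
  rewrite x0 in E.
  by apply: (etrans _ (esym E)); apply: eq_bigr => z _; rewrite pq.
split => //.
have cons := consistency bpos AT.
exists (fun w => p (leaf w)); split; last split.
- move=> w; rewrite pq /q; apply: divr_ge0; [exact: expR_ge0 | exact: Sk_ge0].
- have H0 : (0 < 2 ^ 0)%N by [].
  pose root := @mknode K 0 0 (ltn0Sn K) H0.
  have lr : forall z : node K, (level z == 0%N) = (z == root).
    move=> z; apply/eqP/eqP => [lz|->] //.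
    apply: node_eq => //=; have := idx_lt z; rewrite lz; case: (idx z) => //.
  have : p root = 1.
    rewrite pq /q /Sk /= (big_pred1 root) ?divff // ?gt_eqF ?expR_gt0 //.
  rewrite cons /Lsum => <-; apply: eq_bigl => w.
  rewrite /under leaf_level /= subn0 leaf_idx divn_small //.
- move=> z; rewrite cons /Lsum big_mkcond /=; apply: eq_bigr => w _.
  by rewrite phiE; case: (under _ _); rewrite ?mulr1 ?mulr0.
Qed.
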